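(* Let $D$ be a weakly connected digraph with $n>2$ nodes. Then the burning number of $D$ is at most $n-1$, and this bound is sharp: for every $n>2$ there is a weakly connected digraph with $n$ nodes whose burning number is $n-1$.
   Context: Burning process on a digraph $D$: a sequence $(x_1,\ldots,x_b)$ of nodes is a burning sequence for $D$ if after $b$ steps of the following process every node of $D$ is burned; the $i$-th step consists of first burning all out-neighbours of all currently burned nodes, and then burning the node $x_i$. The burning number of $D$ is the length of a shortest burning sequence. Equivalently, with $N^+_k(v)$ the set of nodes reachable from $v$ by a directed path with at most $k$ arcs, the burning number is the least $b$ such that there are nodes $v_1,\ldots,v_b$ with $V(D)=\bigcup_{i=1}^b N^+_{i-1}(v_i)$. *)

(* Defs.v *)
From mathcomp Require Import all_boot.
Set Implicit Arguments. Unset Strict Implicit. Unset Printing Implicit Defensive.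

(* A digraph on the finite node type T is given by its arc relation e
   (arc x -> y iff e x y); digraphs have no loops: e is irreflexive. *)
Definition digraph (T : finType) (e : rel T) : Prop := irreflexive e.

Definition weakly_connected (T : finType) (e : rel T) : Prop :=
  forall x y : T, connect (fun a b => e a b || e b a) x y.

(* u is in N^+_k(v): there is a directed path v = p_0 -> p_1 -> ... -> u
   with at most k arcs (path p of length size p). *)
Definition in_out_ball (T : finType) (e : rel T) (k : nat) (v u : T) : Prop :=
  exists p : seq T, [/\ path e v p, last v p = u & size p <= k].

(* s = (x_1, ..., x_b) is a burning sequence: V(D) = \bigcup_i N^+_{i-1}(x_i).
   With 0-based index i, the node nth x0 s i is x_{i+1} and its ball radius is i. *)
Definition burning_seq (T : finType) (e : rel T) (s : seq T) : Prop :=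
  forall u : T, exists2 i, i < size s &
    exists x0 : T, in_out_ball e i (nth x0 s i) u.

Definition burning_number (T : finType) (e : rel T) (b : nat) : Prop :=
  (exists s : seq T, burning_seq e s /\ size s = b) /\
  (forall s : seq T, burning_seq e s -> b <= size s).

(* Main.v *)
Require Import Defs.
From mathcomp Require Import all_boot.
From mathcomp Require Import zify.
Set Implicit Arguments. Unset Strict Implicit. Unset Printing Implicit Defensive.

Lemma exists_arc (T : finType) (e : rel T) :
  weakly_connected e -> 2 < #|T| -> exists a b, e a b.
Proof.
move=> wc hT.
have : 0 < #|T| by lia.
case/card_gt0P => x _.
have : 0 < #|predC1 x| by rewrite cardC1; lia.
case/card_gt0P => y; rewrite !inE => yx.
move: (wc x y) => /connectP [p hp hl].
case: p hp hl => [|z p] /=; first by move=> _ hy; rewrite hy eqxx in yx.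
case/andP => /orP [h|h] _ _; by [exists x, z | exists z, x].
Qed.

Lemma upper (T : finType) (e : rel T) :
  digraph e -> weakly_connected e -> 2 < #|T| ->
  exists s, burning_seq e s /\ size s = #|T| - 1.
Proof.
move=> dg wc hT.
have [a [b hab]] := exists_arc wc hT.
have ab : a != b by apply/eqP => E; rewrite E dg in hab.
set P := [pred u : T | (u != a) && (u != b)].
set pre := enum P.
have szpre : size pre = #|T| - 2.
  rewrite /pre -cardE.
  have := cardC (pred2 a b); rewrite card2 ab.
  have -> : #|predC (pred2 a b)| = #|P|.
    by apply: eq_card => u; rewrite !inE negb_or.
  by move=> H; rewrite -H addKn.
exists (pre ++ [:: a]); split; last by rewrite size_cat szpre /= addn1 -subSn //; apply: ltnW.
move=> u.
have Hna : a \notin pre by rewrite mem_enum !inE eqxx.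
case: (eqVneq u b) => [->|ub].
  exists (size pre); first by rewrite size_cat /=; lia.
  exists a; rewrite nth_cat ltnn subnn /=; exists [:: b]; split.
  - by rewrite /= hab.
  - by [].
  - by rewrite /= szpre subn_gt0.
have us : u \in pre ++ [:: a].
  rewrite mem_cat mem_enum !inE ub andbT; by case: eqP.
exists (index u (pre ++ [:: a])); first by rewrite index_mem.
exists u; exists [::]; split => //.
by rewrite nth_index.
Qed.

Lemma star_ball (T : finType) (c : T) k v u :
  u != c ->
  in_out_ball (fun x y : T => (y == c) && (x != c)) k v u -> v = u.
Proof.
move=> uc [p [hp hl _]].
move: hp hl; case/lastP: p => [|p z] //=.
rewrite rcons_path last_rcons => /andP [_ /andP [/eqP zc _]] zu.
by rewrite -zu zc eqxx in uc.
Qed.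

Theorem mainTheorem2 :
  (forall (T : finType) (e : rel T) (b : nat),
      digraph e -> weakly_connected e -> 2 < #|T| ->
      burning_number e b -> b <= #|T| - 1)
  /\
  (forall n : nat, 2 < n ->
      exists (T : finType) (e : rel T),
        [/\ #|T| = n, digraph e, weakly_connected e & burning_number e (n - 1)]).
Proof.
split.
  move=> T e b dg wc hT [_ hmin].
  have [s [hs <-]] := upper dg wc hT.
  exact: hmin.
move=> n hn.
have n0 : 0 < n by lia.
pose c : 'I_n := Ordinal n0.
pose e := fun x y : 'I_n => (y == c) && (x != c).
have dg : digraph e by move=> x; rewrite /e; case: (x == c).
have wc : weakly_connected e.
  move=> x y.
  have h1 : forall z, connect (fun a b => e a b || e b a) z c.
    move=> z; case: (eqVneq z c) => [->|zc]; first exact: connect0.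
    by apply: connect1; rewrite /e eqxx zc.
  have h2 : forall z, connect (fun a b => e a b || e b a) c z.
    move=> z; case: (eqVneq z c) => [->|zc]; first exact: connect0.
    by apply: connect1; rewrite /e eqxx zc orbT.
  exact: connect_trans (h1 x) (h2 y).
have cT : #|'I_n| = n by rewrite card_ord.
exists 'I_n, e; split => //.
split.
  have [s [hs sz]] : exists s, burning_seq e s /\ size s = #|'I_n| - 1 by apply: upper dg wc _; rewrite cT.
  by exists s; rewrite sz cT.
move=> s hs.
have sub : (predC1 c) \subset (mem s).
  apply/subsetP => u; rewrite !inE => uc.
  have [i hi [x0 hb]] := hs u.
  have := star_ball uc hb => <-.
  exact: mem_nth.
have H := subset_leq_card sub; rewrite cardC1 cT in H.
rewrite subn1; exact: leq_trans H (card_size s).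
Qed.
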